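(* Assume the Setup below and $|n-p-1|>1$. Let $m=\min(p,n-1)$ and let $\sigma_1\ge\dots\ge\sigma_m>0$ be the nonzero singular values of $\Sigma^{-1/2}(X-\bar X)$ (which are almost surely positive). Then, almost surely: (1) for either choice $\hat\alpha=c$ (with $c_0=0$) or $\hat\alpha=c\,\mathrm{tr}(W)$ (with $c_0=c$), $\hat a_S\to|n-p-1|-1$ as $c\to0$; (2) as $c\to\infty$, for each $i=1,\dots,m$, $$\frac{\hat a_S}{\sigma_i^2+\hat\alpha}\to\begin{cases}(n-1)p/\mathrm{tr}(W) & \text{if }\hat\alpha=c,\\ \{(n-1)p-2\}/\mathrm{tr}(W) & \text{if }\hat\alpha=c\,\mathrm{tr}(W).\end{cases}$$
   Context: Setup. Let $n\ge 2$, $p\ge1$. Let $X=(x_1,\dots,x_n)$ be a random $p\times n$ matrix whose columns are independent with $x_i\sim\mathcal N_p(\theta_i,\Sigma)$, where $\Sigma$ is a known $p\times p$ positive definite matrix and $\Theta=(\theta_1,\dots,\theta_n)\in\mathbb R^{p\times n}$. Let $\bar x=n^{-1}\sum_{j=1}^n x_j$, $\bar X=\bar x\,1_n^\top$ with $1_n=(1,\dots,1)^\top$, and $W=(X-\bar X)(X-\bar X)^\top\Sigma^{-1}$. The ridge statistic is $\hat\alpha=c$ or $\hat\alpha=c\,\mathrm{tr}(W)$ with a constant $c>0$; correspondingly $c_0=0$ or $c_0=c$. Put $V=(W+\hat\alpha I_p)^{-1}$ and define the estimated weight $$\hat a_S=\frac{(n-p-1)\mathrm{tr}(V)+\hat\alpha(\mathrm{tr}V)^2}{\mathrm{tr}(V^2W)}-(2c_0+1).$$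 *)

(* Defs.v *)
From HB Require Import structures.
From mathcomp Require Import all_boot all_order all_algebra.
Set Implicit Arguments. Unset Strict Implicit. Unset Printing Implicit Defensive.
Import Order.TTheory GRing.Theory Num.Theory.
Local Open Scope ring_scope.

Section Defs.
Variable R : realFieldType.

Definition posdef (p : nat) (M : 'M[R]_p) : Prop :=
  forall v : 'rV[R]_p, v != 0 -> 0 < (v *m M *m v^T) 0 0.

Definition Xbar (p n : nat) (X : 'M[R]_(p, n)) : 'M[R]_(p, n) :=
  \matrix_(i < p, j < n) (n%:R^-1 * \sum_(k < n) X i k).

Definition Wmat (p n : nat) (Sigma : 'M[R]_p) (X : 'M[R]_(p, n)) : 'M[R]_p :=
  (X - Xbar X) *m (X - Xbar X)^T *m invmx Sigma.

Definition Vmat (p : nat) (W : 'M[R]_p) (alpha : R) : 'M[R]_p :=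
  invmx (W + alpha%:M).

Definition aS (n p : nat) (W : 'M[R]_p) (alpha c0 : R) : R :=
  let V := Vmat W alpha in
  ((n%:R - p%:R - 1) * \tr V + alpha * (\tr V) ^+ 2) / \tr (V *m V *m W)
  - (2 * c0 + 1).

Definition lim_at0 (f : R -> R) (l : R) : Prop :=
  forall e : R, 0 < e -> exists2 d : R, 0 < d &
    forall c : R, 0 < c -> c < d -> `|f c - l| < e.

Definition lim_at_infty (f : R -> R) (l : R) : Prop :=
  forall e : R, 0 < e -> exists M : R,
    forall c : R, M < c -> `|f c - l| < e.

(* sigma_1,...,sigma_m (m <= min p n) occupy the diagonal of a singular value
   decomposition A = U D V^T (U, V orthogonal), all other entries of D zero. *)
Definition svd_diag (p n m : nat) (sigma : 'I_m -> R) : 'M[R]_(p, n) :=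
  \matrix_(i < p, j < n)
     \sum_(k < m) (if ((i : nat) == k) && ((j : nat) == k) then sigma k else 0).

Definition are_singular_values (p n m : nat) (A : 'M[R]_(p, n))
    (sigma : 'I_m -> R) : Prop :=
  exists U : 'M[R]_p, exists V : 'M[R]_n,
    [/\ U *m U^T = 1%:M, V *m V^T = 1%:M & A = U *m svd_diag p n sigma *m V^T].

End Defs.

(* Main.v *)
Require Import Defs.
From HB Require Import structures.
From mathcomp Require Import all_boot all_order all_algebra.
From mathcomp Require Import ring lra.
Import Order.TTheory GRing.Theory Num.Theory.
Set Implicit Arguments. Unset Strict Implicit.
Local Open Scope ring_scope.

Section Lim.
Variable R : realFieldType.
Implicit Types (f g : R -> R) (l m : R).

Lemma lim0_ext {f g l} : (forall c, 0 < c -> f c = g c) -> lim_at0 f l -> lim_at0 g l.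
Proof.
move=> E H e e0; have [d d0 Hd] := H e e0; exists d => // c c0 cd.
by rewrite -E // Hd.
Qed.

Lemma lim0_cst (a : R) : lim_at0 (fun _ => a) a.
Proof. by move=> e e0; exists 1 => // c _ _; rewrite subrr normr0. Qed.

Lemma lim0_id : lim_at0 (fun c : R => c) 0.
Proof. by move=> e e0; exists e => // c c0 ce; rewrite subr0 gtr0_norm. Qed.

Lemma lim0_add {f g l m} : lim_at0 f l -> lim_at0 g m -> lim_at0 (fun c => f c + g c) (l + m).
Proof.
move=> Hf Hg e e0.
have e2 : 0 < e / 2 by rewrite divr_gt0.
have [d1 d10 H1] := Hf _ e2; have [d2 d20 H2] := Hg _ e2.
exists (Num.min d1 d2); first by rewrite lt_min d10.
move=> c c0; rewrite lt_min => /andP[c1 c2].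
have := H1 c c0 c1; have := H2 c c0 c2.
have -> : f c + g c - (l + m) = (f c - l) + (g c - m) by ring.
move=> h2 h1; apply: le_lt_trans (ler_normD _ _) _.
have -> : e = e / 2 + e / 2 by field.
by apply: ltrD.
Qed.

Lemma lim0_opp {f l} : lim_at0 f l -> lim_at0 (fun c => - f c) (- l).
Proof.
move=> Hf e e0; have [d d0 H] := Hf e e0; exists d => // c c0 cd.
by rewrite -opprD normrN H.
Qed.

Lemma lim0_mul {f g l m} : lim_at0 f l -> lim_at0 g m -> lim_at0 (fun c => f c * g c) (l * m).
Proof.
move=> Hf Hg e e0.
set K := 1 + `|l| + `|m|.
have K0 : 0 < K by rewrite /K; have := normr_ge0 l; have := normr_ge0 m; lra.
set e' := Num.min 1 (e / K).
have e'0 : 0 < e' by rewrite lt_min ltr01 divr_gt0.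
have e'1 : e' <= 1 by rewrite ge_min lexx.
have e'K : e' * K <= e.
  by rewrite -ler_pdivlMr // ge_min lexx orbT.
have [d1 d10 H1] := Hf _ e'0; have [d2 d20 H2] := Hg _ e'0.
exists (Num.min d1 d2); first by rewrite lt_min d10.
move=> c c0; rewrite lt_min => /andP[c1 c2].
have h1 := H1 c c0 c1; have h2 := H2 c c0 c2.
have -> : f c * g c - l * m = (f c - l) * (g c - m) + l * (g c - m) + (f c - l) * m by ring.
apply: (le_lt_trans (ler_normD _ _)); rewrite normrM.
apply: (le_lt_trans (lerD (ler_normD _ _) (lexx _))); rewrite !normrM.
set a := `|f c - l| in h1 *; set b := `|g c - m| in h2 *.
have a0 : 0 <= a by apply: normr_ge0.
have b0 : 0 <= b by apply: normr_ge0.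
have l0 := normr_ge0 l; have m0 := normr_ge0 m.
apply: (lt_le_trans _ e'K); rewrite /K.
have hab : a * b <= e' * b by apply: ler_wpM2r; lra.
have hb : e' * b <= e' * 1 * b by rewrite mulr1.
have : `|l| * b <= `|l| * e' by apply: ler_wpM2l => //; lra.
have : a * `|m| <= e' * `|m| by apply: ler_wpM2r => //; lra.
have : e' * b < e' * e' by rewrite ltr_pM2l.
have : e' * e' <= e' * 1 by apply: ler_wpM2l; lra.
nra.
Qed.

Lemma lim0_inv {f l} : l != 0 -> lim_at0 f l -> lim_at0 (fun c => (f c)^-1) l^-1.
Proof.
move=> l0 Hf e e0.
have nl : 0 < `|l| by rewrite normr_gt0.
set e' := Num.min (`|l| / 2) (e * (`|l| * `|l|) / 2).
have e'0 : 0 < e' by rewrite lt_min !divr_gt0 ?mulr_gt0.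
have [d d0 H] := Hf _ e'0; exists d => // c c0 cd.
have h := H c c0 cd.
have h1 : e' <= `|l| / 2 by rewrite ge_min lexx.
have h2 : e' <= e * (`|l| * `|l|) / 2 by rewrite ge_min lexx orbT.
have fl : `|l| / 2 < `|f c|.
  have := ler_dist_dist (f c) l; rewrite ler_norml => /andP[hh _].
  have : `|l| - `|f c| < `|l| / 2 by lra.
  lra.
have fc0 : f c != 0 by rewrite -normr_gt0; apply: lt_trans fl; rewrite divr_gt0.
have -> : (f c)^-1 - l^-1 = (l - f c) / (f c * l) by field; rewrite fc0 l0.
rewrite normrM normfV normrM distrC.
rewrite ltr_pdivrMr ?mulr_gt0 ?normr_gt0 //.
apply: (lt_le_trans h); apply: (le_trans h2).
have : `|l| * `|l| / 2 <= `|f c| * `|l|.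
  rewrite mulrAC ler_pM2r //; lra.
move=> hh; rewrite -mulrA ler_pM2l //.
Qed.


Lemma lim0_sum (I : Type) (r : seq I) (P : pred I) (F : I -> R -> R) (L : I -> R) :
  (forall i, P i -> lim_at0 (F i) (L i)) ->
  lim_at0 (fun c => \sum_(i <- r | P i) F i c) (\sum_(i <- r | P i) L i).
Proof.
move=> H; elim: r => [|i r IH].
  rewrite big_nil; apply: (lim0_ext _ (lim0_cst (0 : R))) => c _; by rewrite big_nil.
case Pi: (P i).
  rewrite big_cons Pi.
  have := lim0_add (H i Pi) IH; apply: lim0_ext.
  by move=> c _; rewrite big_cons Pi.
rewrite big_cons Pi.
move: IH; apply: lim0_ext => c _; by rewrite big_cons Pi.
Qed.

Lemma lim0_scale {f l T} : 0 < T -> lim_at0 f l -> lim_at0 (fun c => f (c * T)) l.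
Proof.
move=> T0 H e e0; have [d d0 Hd] := H e e0.
exists (d / T); first by rewrite divr_gt0.
move=> c c0 cd; apply: Hd; first by rewrite mulr_gt0.
by rewrite -ltr_pdivlMr.
Qed.

Lemma lim0_infty F G l T : 0 < T -> lim_at0 G l ->
  (forall c, 0 < c -> F c = G ((c * T)^-1)) -> lim_at_infty F l.
Proof.
move=> T0 H E e e0; have [d d0 Hd] := H e e0.
exists ((d * T)^-1) => c cM.
have dT : 0 < (d * T)^-1 by rewrite invr_gt0 mulr_gt0.
have c0 : 0 < c by apply: lt_trans cM.
rewrite E //; apply: Hd; first by rewrite invr_gt0 mulr_gt0.
rewrite -(invrK d) ltf_pV2 ?posrE ?invr_gt0 ?mulr_gt0 //.
by rewrite -ltr_pdivrMr // -invfM.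
Qed.


Lemma liminf_ext {f g l} : (forall c, 0 < c -> f c = g c) -> lim_at_infty f l -> lim_at_infty g l.
Proof.
move=> E H e e0; have [M HM] := H e e0; exists (Num.max M 0) => c.
rewrite gt_max => /andP[cM c0]; by rewrite -E // HM.
Qed.

End Lim.

Section Spec.
Variable R : realFieldType.

Lemma inv_uniq p (M N : 'M[R]_p) : M *m N = 1%:M -> invmx M = N.
Proof.
move=> MN; have [Mu _] := mulmx1_unit MN.
by rewrite -[RHS](mulKmx Mu) MN mulmx1.
Qed.

Lemma conj_diag p (P Q : 'M[R]_p) (d e : 'rV[R]_p) : Q *m P = 1%:M ->
  P *m diag_mx d *m Q *m (P *m diag_mx e *m Q) = P *m diag_mx (\row_k (d 0 k * e 0 k)) *m Q.
Proof.
move=> QP; rewrite !mulmxA -[P *m diag_mx d *m Q *m P]mulmxA QP mulmx1.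
by rewrite -[P *m diag_mx d *m diag_mx e]mulmxA mulmx_diag.
Qed.

Lemma tr_conj p (P Q : 'M[R]_p) (d : 'rV[R]_p) : Q *m P = 1%:M ->
  \tr (P *m diag_mx d *m Q) = \sum_k d 0 k.
Proof.
by move=> QP; rewrite mxtrace_mulC mulmxA QP mul1mx mxtrace_diag.
Qed.

Lemma spectral p (W P Q : 'M[R]_p) (d : 'rV[R]_p) :
  P *m Q = 1%:M -> W = P *m diag_mx d *m Q -> (forall k, 0 <= d 0 k) ->
  \tr W = \sum_k d 0 k /\
  forall a, 0 < a ->
  \tr (Vmat W a) = \sum_k (d 0 k + a)^-1 /\
  \tr (Vmat W a *m Vmat W a *m W) = \sum_k d 0 k / (d 0 k + a) ^+ 2.
Proof.
move=> PQ WE d0; have QP := mulmx1C PQ.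
split; first by rewrite WE tr_conj.
move=> a a0.
have pos k : d 0 k + a != 0 by apply: lt0r_neq0; have := d0 k; lra.
have E1 : W + a%:M = P *m diag_mx (\row_k (d 0 k + a)) *m Q.
  have -> : \row_k (d 0 k + a) = d + const_mx a.
    by apply/matrixP => i j; rewrite !mxE (ord1 i).
  rewrite raddfD /= diag_const_mx mulmxDr mulmxDl -WE; congr (_ + _).
  by rewrite scalar_mxC -mulmxA PQ mulmx1.
have E2 : Vmat W a = P *m diag_mx (\row_k (d 0 k + a)^-1) *m Q.
  rewrite /Vmat E1; apply: inv_uniq; rewrite conj_diag //.
  have -> : \row_k ((\row_k0 (d 0 k0 + a)) 0 k * (\row_k0 (d 0 k0 + a)^-1) 0 k) = const_mx 1.
    by apply/matrixP => i j; rewrite !mxE divff.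
  by rewrite diag_const_mx mulmx1 PQ.
split; first by rewrite E2 tr_conj //; apply: eq_bigr => k _; rewrite mxE.
rewrite E2 WE !conj_diag // tr_conj //; apply: eq_bigr => k _; rewrite !mxE.
by rewrite mulrC expr2 invfM mulrA.
Qed.

End Spec.

Section SVD.
Variable R : realFieldType.

Definition ev m (s : 'I_m -> R) (k : nat) : R :=
  \sum_(l < m) (if k == (l : nat) then s l else 0).

Lemma svd_diagE p n m (s : 'I_m -> R) i j :
  svd_diag p n s i j = if (i : nat) == j then ev s i else 0.
Proof.
rewrite mxE /ev; case: eqP => [ij|nij].
  by apply: eq_bigr => l _; rewrite ij andbb.
apply: big1 => l _; case: eqP => // il; case: eqP => // jl.
by case: nij; rewrite il jl.
Qed.

Lemma ev_out m (s : 'I_m -> R) k : (m <= k)%N -> ev s k = 0.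
Proof.
move=> mk; apply: big1 => l _; case: eqP => // kl.
by have := ltn_ord l; rewrite -kl ltnNge mk.
Qed.

Lemma ev_in m (s : 'I_m -> R) (l : 'I_m) : ev s l = s l.
Proof.
rewrite /ev (bigD1 l) //= eqxx big1 ?addr0 // => l' nl.
by case: eqP => // /val_inj E; rewrite E eqxx in nl.
Qed.

Lemma svd_DDt p n m (s : 'I_m -> R) : (m <= n)%N ->
  svd_diag p n s *m (svd_diag p n s)^T = diag_mx (\row_k (ev s k) ^+ 2).
Proof.
move=> mn; apply/matrixP => i i'; rewrite !mxE.
under eq_bigr => j _ do rewrite svd_diagE [X in _ * X]mxE svd_diagE.
case: (eqVneq i i') => [<-|nii].
  rewrite mulr1n.
  case: (ltnP i n) => [iN|iN].
    rewrite (bigD1 (Ordinal iN)) //= eqxx -expr2 big1 ?addr0 // => j nj.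
    case: eqP => [ij|_]; last by rewrite mulr0.
    have : j == Ordinal iN by apply/eqP/val_inj; rewrite /= ij.
    by rewrite (negbTE nj).
  rewrite ev_out ?(leq_trans mn) // expr0n /= big1 // => j _.
  by case: ifP; rewrite mul0r.
rewrite mulr0n; apply: big1 => j _.
case: eqP => [ij|]; case: eqP => [i'j|]; rewrite ?mulr0 ?mul0r //.
by case/eqP: nii; apply: val_inj; rewrite /= ij i'j.
Qed.

End SVD.

Section Bridge.
Variable R : realFieldType.

Lemma posdef_unit p (S : 'M[R]_p) : posdef S -> S \in unitmx.
Proof.
move=> pd; rewrite unitmxE unitfE; apply/negP => /det0P [v v0 vS].
by have := pd v v0; rewrite vS mul0mx mxE ltxx.
Qed.

Lemma bridge p n m (Sigma S : 'M[R]_p) (X : 'M[R]_(p, n)) (s : 'I_m -> R) :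
  (m <= n)%N -> S^T = S -> posdef S -> S *m S = invmx Sigma ->
  are_singular_values (S *m (X - Xbar X)) s ->
  exists P Q : 'M[R]_p, P *m Q = 1%:M /\
    Wmat Sigma X = P *m diag_mx (\row_k (ev s k) ^+ 2) *m Q.
Proof.
move=> mn ST pd SS [U [V [UU VV AE]]].
have Su := posdef_unit pd.
set B := X - Xbar X in AE *.
exists (invmx S *m U), (U^T *m S); split.
  by rewrite -mulmxA [U *m _]mulmxA UU mul1mx mulVmx.
have BE : B = invmx S *m (U *m svd_diag p n s *m V^T).
  by rewrite -AE mulKmx.
have BtS : B^T *m S = (U *m svd_diag p n s *m V^T)^T.
  by rewrite -AE trmx_mul ST.
rewrite /Wmat -/B -SS.
have VV' := mulmx1C VV.
rewrite -(@svd_DDt R p n m s mn).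
rewrite [B *m B^T *m (S *m S)]mulmxA -[B *m B^T *m S]mulmxA BtS.
rewrite {1}BE !trmx_mul !trmxK.
rewrite !mulmxA; congr (_ *m _).
by rewrite -[invmx S *m U *m svd_diag p n s *m V^T *m V]mulmxA VV' mulmx1.
Qed.

End Bridge.

Section Anal.
Variable R : realFieldType.
Variable p : nat.
Variable lam : 'I_p -> R.
Hypothesis lam0 : forall k, 0 <= lam k.
Variable k0 : 'I_p.
Hypothesis lamk0 : 0 < lam k0.

Lemma lim0_shift (b : R) : lim_at0 (fun a => b + a) b.
Proof. by rewrite -{2}[b]addr0; exact: (lim0_add (lim0_cst b) (@lim0_id R)). Qed.

Definition tt (a : R) := \sum_k (lam k + a)^-1.
Definition ss (a : R) := \sum_k lam k / (lam k + a) ^+ 2.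
Definition zz : R := \sum_k (if lam k == 0 then 1 else 0).
Definition Sg (a : R) := \sum_k (if lam k == 0 then 0 else (lam k + a)^-1).
Definition S0 : R := \sum_k (if lam k == 0 then 0 else (lam k)^-1).

Lemma S0_gt0 : 0 < S0.
Proof.
rewrite /S0 (bigD1 k0) //= (negbTE (lt0r_neq0 lamk0)).
apply: (lt_le_trans _ (lerD (lexx _) (sumr_ge0 _ _))).
  by rewrite addr0 invr_gt0.
move=> k _; case: ifP => // _; rewrite invr_ge0 //.
Qed.

Lemma tt_split a : 0 < a -> tt a = Sg a + zz / a.
Proof.
move=> a0; rewrite /tt /Sg /zz mulr_suml -big_split /=.
apply: eq_bigr => k _; case: (eqVneq (lam k) 0) => [->|nz].
  by rewrite !add0r div1r.
by rewrite mul0r addr0.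
Qed.

Lemma lim_Sg : lim_at0 Sg S0.
Proof.
apply: lim0_sum => k _; case: eqP => [_|/eqP nz]; first exact: lim0_cst.
apply: lim0_inv => //; exact: lim0_shift.
Qed.

Lemma lim_ss : lim_at0 ss S0.
Proof.
rewrite /S0; apply: (lim0_ext (f := fun a => \sum_k (if lam k == 0 then 0 else lam k / (lam k + a) ^+ 2))).
  move=> c _; apply: eq_bigr => k _; case: eqP => [->|//]; by rewrite mul0r.
apply: lim0_sum => k _; case: eqP => [_|/eqP nz]; first exact: lim0_cst.
have -> : (lam k)^-1 = lam k * ((lam k) ^+ 2)^-1.
  by rewrite expr2 invfM mulrA divff // mul1r.
apply: lim0_mul (lim0_cst _) _; apply: lim0_inv.
  by rewrite expf_neq0.
rewrite expr2; apply: (lim0_ext (f := fun a => (lam k + a) * (lam k + a))).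
  by move=> c _; rewrite expr2.
apply: lim0_mul; exact: lim0_shift.
Qed.

Lemma ss_gt0 a : 0 < a -> 0 < ss a.
Proof.
move=> a0; rewrite /ss (bigD1 k0) //=.
apply: (lt_le_trans _ (lerD (lexx _) (sumr_ge0 _ _))).
  rewrite addr0 divr_gt0 // exprn_gt0 //; have := lam0 k0; lra.
move=> k _; rewrite divr_ge0 ?exprn_ge0 //; have := lam0 k; lra.
Qed.

Lemma part1 (N : R) : zz * (N + zz) = 0 ->
  lim_at0 (fun a => (N * tt a + a * tt a ^+ 2) / ss a) (N + 2 * zz).
Proof.
move=> hz.
have L : lim_at0 (fun a => ((N + 2 * zz) * Sg a + a * (Sg a * Sg a)) * (ss a)^-1)
          (((N + 2 * zz) * S0 + 0 * (S0 * S0)) * S0^-1).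
  apply: lim0_mul; last by apply: lim0_inv; [exact: lt0r_neq0 S0_gt0 | exact: lim_ss].
  apply: lim0_add; first exact: lim0_mul (lim0_cst _) lim_Sg.
  exact: lim0_mul (@lim0_id R) (lim0_mul lim_Sg lim_Sg).
rewrite mul0r addr0 -mulrA divff ?mulr1 in L; last exact: lt0r_neq0 S0_gt0.
apply: lim0_ext L => a a0; rewrite tt_split //.
have ssn : ss a != 0 by apply: lt0r_neq0; apply: ss_gt0.
have an : a != 0 by apply: lt0r_neq0.
congr (_ / _).
have -> : N * (Sg a + zz / a) + a * (Sg a + zz / a) ^+ 2
   = (N + 2 * zz) * Sg a + a * (Sg a * Sg a) + zz * (N + zz) / a by field.
by rewrite hz mul0r addr0.
Qed.


Definition AA (u : R) := \sum_k (1 + lam k * u)^-1.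
Definition BB (u : R) := \sum_k lam k / (1 + lam k * u) ^+ 2.
Definition TT : R := \sum_k lam k.

Lemma TT_gt0 : 0 < TT.
Proof.
rewrite /TT (bigD1 k0) //=.
by apply: (lt_le_trans _ (lerD (lexx _) (sumr_ge0 _ _))); rewrite ?addr0.
Qed.

Lemma BB_gt0 u : 0 <= u -> 0 < BB u.
Proof.
move=> u0; rewrite /BB (bigD1 k0) //=.
have hk k : 0 < 1 + lam k * u by have := mulr_ge0 (lam0 k) u0; lra.
apply: (lt_le_trans _ (lerD (lexx _) (sumr_ge0 _ _))).
  by rewrite addr0 divr_gt0 // exprn_gt0.
by move=> k _; rewrite divr_ge0 ?exprn_ge0 // ltW.
Qed.

Lemma lim_term k : lim_at0 (fun u => 1 + lam k * u) 1.
Proof.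
rewrite -{2}[1]addr0 -(mulr0 (lam k)).
exact: lim0_add (lim0_cst _) (lim0_mul (lim0_cst _) (@lim0_id R)).
Qed.

Lemma lim_AA : lim_at0 AA p%:R.
Proof.
have -> : p%:R = \sum_(k < p) (1 : R) by rewrite sumr_const card_ord.
rewrite /AA; apply: lim0_sum => k _; rewrite -[1 in X in lim_at0 _ X]invr1.
apply: lim0_inv; [exact: oner_neq0 | exact: lim_term].
Qed.

Lemma lim_BB : lim_at0 BB TT.
Proof.
rewrite /BB /TT; apply: lim0_sum => k _; rewrite -[lam k in X in lim_at0 _ X]mulr1.
apply: lim0_mul (lim0_cst _) _; rewrite -[1 in X in lim_at0 _ X]invr1.
apply: lim0_inv; first exact: oner_neq0.
rewrite -[1 in X in lim_at0 _ X]mulr1.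
apply: (lim0_ext (f := fun u => (1 + lam k * u) * (1 + lam k * u))).
  by move=> c _; rewrite expr2.
exact: lim0_mul (lim_term k) (lim_term k).
Qed.

Lemma tt_AA a : 0 < a -> tt a = a^-1 * AA a^-1.
Proof.
move=> a0; rewrite /tt /AA mulr_sumr; apply: eq_bigr => k _.
have := lam0 k => l0.
have an : a != 0 by apply: lt0r_neq0.
have h1 : lam k + a != 0 by apply: lt0r_neq0; lra.
have h2 : 1 + lam k * a^-1 != 0.
  apply: lt0r_neq0; have ai : 0 <= a^-1 by rewrite invr_ge0 ltW.
  have := mulr_ge0 l0 ai; lra.
by field; rewrite an addrC h1.
Qed.

Lemma ss_BB a : 0 < a -> ss a = a^-1 ^+ 2 * BB a^-1.
Proof.
move=> a0; rewrite /ss /BB mulr_sumr; apply: eq_bigr => k _.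
have := lam0 k => l0.
have an : a != 0 by apply: lt0r_neq0.
have h1 : lam k + a != 0 by apply: lt0r_neq0; lra.
have h2 : 1 + lam k * a^-1 != 0.
  apply: lt0r_neq0; have ai : 0 <= a^-1 by rewrite invr_ge0 ltW.
  have := mulr_ge0 l0 ai; lra.
by field; rewrite an addrC h1.
Qed.

Lemma part2a (N q : R) : 0 <= q ->
  lim_at_infty (fun c => ((N * tt c + c * tt c ^+ 2) / ss c - (2 * 0 + 1)) / (q + c))
    ((N + p%:R) * p%:R / TT).
Proof.
move=> q0.
have T0 := TT_gt0.
have L : lim_at0 (fun u => ((N * AA u + AA u * AA u) * (BB u)^-1 - u) * (q * u + 1)^-1)
   (((N * p%:R + p%:R * p%:R) * TT^-1 - 0) * (q * 0 + 1)^-1).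
  apply: lim0_mul; last first.
    apply: lim0_inv; first by rewrite mulr0 add0r oner_neq0.
    exact: lim0_add (lim0_mul (lim0_cst _) (@lim0_id R)) (lim0_cst _).
  apply: lim0_add; last exact: lim0_opp (@lim0_id R).
  apply: lim0_mul; last by apply: lim0_inv; [exact: lt0r_neq0 | exact: lim_BB].
  exact: lim0_add (lim0_mul (lim0_cst _) lim_AA) (lim0_mul lim_AA lim_AA).
have -> : (N + p%:R) * p%:R / TT = ((N * p%:R + p%:R * p%:R) * TT^-1 - 0) * (q * 0 + 1)^-1.
  by rewrite mulr0 add0r invr1 mulr1 subr0 mulrDl.
apply: (lim0_infty ltr01 L) => c c0; rewrite mulr1.
rewrite tt_AA // ss_BB //.
have cn : c != 0 by apply: lt0r_neq0.
have Bn : BB c^-1 != 0 by apply: lt0r_neq0; apply: BB_gt0; rewrite invr_ge0 ltW.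
have qn : q * c^-1 + 1 != 0.
  apply: lt0r_neq0; have ai : 0 <= c^-1 by rewrite invr_ge0 ltW.
  have := mulr_ge0 q0 ai; lra.
have qn' : q + c != 0 by apply: lt0r_neq0; lra.
by field; rewrite cn qn' Bn.
Qed.

Lemma part2b (N q : R) : 0 <= q ->
  lim_at_infty (fun c => ((N * tt (c * TT) + (c * TT) * tt (c * TT) ^+ 2) / ss (c * TT)
                          - (2 * c + 1)) / (q + c * TT))
    (((N + p%:R) * p%:R - 2) / TT).
Proof.
move=> q0.
have T0 := TT_gt0.
have Tn : TT != 0 by apply: lt0r_neq0.
have L : lim_at0 (fun u => ((N * AA u + AA u * AA u) * (BB u)^-1 - 2 * TT^-1 - u) * (q * u + 1)^-1)
   (((N * p%:R + p%:R * p%:R) * TT^-1 - 2 * TT^-1 - 0) * (q * 0 + 1)^-1).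
  apply: lim0_mul; last first.
    apply: lim0_inv; first by rewrite mulr0 add0r oner_neq0.
    exact: lim0_add (lim0_mul (lim0_cst _) (@lim0_id R)) (lim0_cst _).
  apply: lim0_add; last exact: lim0_opp (@lim0_id R).
  apply: lim0_add; last exact: lim0_cst.
  apply: lim0_mul; last by apply: lim0_inv; [exact: lt0r_neq0 | exact: lim_BB].
  exact: lim0_add (lim0_mul (lim0_cst _) lim_AA) (lim0_mul lim_AA lim_AA).
have -> : ((N + p%:R) * p%:R - 2) / TT = ((N * p%:R + p%:R * p%:R) * TT^-1 - 2 * TT^-1 - 0) * (q * 0 + 1)^-1.
  by rewrite mulr0 add0r invr1 mulr1 subr0; field.
apply: (lim0_infty T0 L) => c c0.
have cT : 0 < c * TT by rewrite mulr_gt0.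
rewrite tt_AA // ss_BB //.
have cn : c != 0 by apply: lt0r_neq0.
have Bn : BB (c * TT)^-1 != 0 by apply: lt0r_neq0; apply: BB_gt0; rewrite invr_ge0 ltW.
have qn : q * (c * TT)^-1 + 1 != 0.
  apply: lt0r_neq0; have ai : 0 <= (c * TT)^-1 by rewrite invr_ge0 ltW.
  have := mulr_ge0 q0 ai; lra.
have qn' : q + c * TT != 0 by apply: lt0r_neq0; lra.
by field; rewrite Tn cn qn' Bn.
Qed.

End Anal.

Lemma zz_val (R : realFieldType) p m (lam : 'I_p -> R) : (m <= p)%N ->
  (forall k : 'I_p, (lam k == 0) = (m <= k)%N) -> zz lam = (p - m)%:R.
Proof.
move=> mp H; rewrite /zz.
under eq_bigr do rewrite H.
rewrite -(big_mkord xpredT (fun k => if (m <= k)%N then (1 : R) else 0)).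
rewrite (@big_cat_nat _ _ _ m 0 p _ _ (leq0n m) mp) /=.
rewrite (eq_big_nat _ _ (F2 := fun _ => 0)); last first.
  by move=> k /andP[_ km]; rewrite leqNgt km.
rewrite big1_eq add0r (eq_big_nat _ _ (F2 := fun _ => 1)); last first.
  by move=> k /andP[mk _]; rewrite mk.
by rewrite sumr_const_nat.
Qed.

Lemma aS_eq (R : realFieldType) n p (W P Q : 'M[R]_p) (lam : 'I_p -> R) a c0 :
  P *m Q = 1%:M -> W = P *m diag_mx (\row_k lam k) *m Q -> (forall k, 0 <= lam k) ->
  0 < a ->
  aS n W a c0 = (((n%:R - p%:R - 1) * tt lam a + a * tt lam a ^+ 2) / ss lam a - (2 * c0 + 1)).
Proof.
move=> PQ WE l0 a0.
have l0' : forall k, 0 <= (\row_k lam k) 0 k by move=> k; rewrite mxE.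
have [_ H] := spectral PQ WE l0'.
have [H1 H2] := H a a0.
rewrite /aS /= H1 H2 /tt /ss.
by congr (((_ * _ + _ * _ ^+ 2) / _) - _); apply: eq_bigr => k _; rewrite mxE.
Qed.

Unset Implicit Arguments.
Theorem proposition3 (R : realFieldType) (n p : nat)
    (Sigma Shalf : 'M[R]_p) (X : 'M[R]_(p, n))
    (sigma : 'I_(minn p n.-1) -> R) :
  (2 <= n)%N -> (1 <= p)%N ->
  Sigma^T = Sigma -> posdef Sigma ->
  Shalf^T = Shalf -> posdef Shalf -> Shalf *m Shalf = invmx Sigma ->
  1 < `|n%:R - p%:R - 1 : R| ->
  (forall i, 0 < sigma i) ->
  (forall i j : 'I_(minn p n.-1), (i <= j)%N -> sigma j <= sigma i) ->
  are_singular_values (Shalf *m (X - Xbar X)) sigma ->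
  let W := Wmat Sigma X in
  [/\ lim_at0 (fun c => aS n W c 0) (`|n%:R - p%:R - 1| - 1),
      lim_at0 (fun c => aS n W (c * \tr W) c) (`|n%:R - p%:R - 1| - 1),
      (forall i, lim_at_infty (fun c => aS n W c 0 / (sigma i ^+ 2 + c))
                   ((n%:R - 1) * p%:R / \tr W))
    & (forall i, lim_at_infty
                   (fun c => aS n W (c * \tr W) c / (sigma i ^+ 2 + c * \tr W))
                   (((n%:R - 1) * p%:R - 2) / \tr W))].
Proof.
move=> n2 p1 _ _ ST Spd SS _ spos _ Hsv W.
set m := minn p n.-1.
have mn : (m <= n)%N by rewrite /m (leq_trans (geq_minr _ _)) // leq_pred.
have mp : (m <= p)%N by rewrite /m geq_minl.
have m1 : (0 < m)%N by rewrite /m leq_min p1 -ltnS prednK // ltnW.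
have [P [Q [PQ WE]]] := bridge mn ST Spd SS Hsv.
set lam : 'I_p -> R := fun k => ev sigma k ^+ 2.
have l0 : forall k, 0 <= lam k by move=> k; apply: sqr_ge0.
have WE' : W = P *m diag_mx (\row_k lam k) *m Q by rewrite /W WE.
have evin k (h : (k < m)%N) : ev sigma k = sigma (Ordinal h) by rewrite -ev_in.
pose k0 : 'I_p := Ordinal (p1 : (0 < p)%N).
have lk0 : 0 < lam k0.
  by rewrite /lam /= (evin 0%N m1) exprn_gt0.
have lamz k : (lam k == 0) = (m <= k)%N.
  rewrite /lam expf_eq0 /=; case: (ltnP k m) => [km|km].
    by rewrite evin; apply/negbTE/lt0r_neq0.
  by rewrite ev_out // eqxx.
have zE := zz_val mp lamz.
have l0' : forall k, 0 <= (\row_k lam k) 0 k by move=> k; rewrite mxE.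
have [trW _] := spectral PQ WE' l0'.
have trT : \tr W = TT lam by rewrite trW /TT; apply: eq_bigr => k _; rewrite mxE.
have T0 : 0 < TT lam := TT_gt0 l0 lk0.
set N : R := n%:R - p%:R - 1.
have [hz habs] : zz lam * (N + zz lam) = 0 /\ `|N| = N + 2 * zz lam.
  rewrite zE /N; case: (leqP p n.-1) => [pn|pn].
    have -> : m = p by rewrite /m; apply/minn_idPl.
    rewrite subnn mul0r mulr0 addr0; split => //.
    have pn' : (p.+1 <= n)%N by rewrite -(prednK (ltnW n2)) ltnS.
    have -> : n%:R - p%:R - 1 = (n - p.+1)%:R :> R.
      by rewrite natrB // -natr1; ring.
    by rewrite ger0_norm.
  have -> : m = n.-1 by rewrite /m; apply/minn_idPr/ltnW.
  have En : n%:R = n.-1%:R + 1 :> R by rewrite natr1 prednK // ltnW.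
  rewrite natrB ?(ltnW pn) // En.
  have -> : n.-1%:R + 1 - p%:R - 1 = - (p%:R - n.-1%:R) :> R by ring.
  split; first by ring.
  rewrite normrN ger0_norm; first by ring.
  by rewrite subr_ge0 ler_nat ltnW.
have aE a c0 : 0 < a -> aS n W a c0 =
    (N * tt lam a + a * tt lam a ^+ 2) / ss lam a - (2 * c0 + 1).
  by move=> a0; rewrite (aS_eq n c0 PQ WE' l0 a0).
have Nn : `|N| - 1 = (N + 2 * zz lam) + - (2 * 0 + 1) by rewrite habs; ring.
split.
- rewrite -/N Nn.
  apply: (lim0_ext (f := fun c => (N * tt lam c + c * tt lam c ^+ 2) / ss lam c + - (2 * 0 + 1))).
    by move=> c c0; rewrite aE.
  exact: lim0_add (part1 l0 lk0 hz) (lim0_cst _).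
- rewrite -/N Nn trT.
  apply: (lim0_ext (f := fun c => (N * tt lam (c * TT lam) + (c * TT lam) * tt lam (c * TT lam) ^+ 2)
                                    / ss lam (c * TT lam) + - (2 * c + 1))).
    by move=> c c0; rewrite aE // mulr_gt0.
  apply: lim0_add; first exact: lim0_scale T0 (part1 l0 lk0 hz).
  apply: lim0_opp; apply: lim0_add (lim0_cst _).
  exact: lim0_mul (lim0_cst _) (@lim0_id R).
- move=> i; rewrite trT.
  have -> : n%:R - 1 = N + p%:R :> R by rewrite /N; ring.
  apply: liminf_ext (part2a l0 lk0 N (sqr_ge0 (sigma i))).
  by move=> c c0; rewrite aE.
- move=> i; rewrite trT.
  have -> : n%:R - 1 = N + p%:R :> R by rewrite /N; ring.
  apply: liminf_ext (part2b l0 lk0 N (sqr_ge0 (sigma i))).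
  by move=> c c0; rewrite aE // mulr_gt0.
Qed.
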